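(* Let $\theta=[a_1,a_2,\dots]$ be irrational with $a_1=a_2=a_3=1$, let $n\ge1$, and let $(x_k)_{k>0}$ be a finite or infinite sequence of real numbers (defined at least for $0<k\le q_n$) satisfying, for all indices $0<k<q_n$, the following: (1) $x_{q_j}<0$ if $j\equiv0,1\pmod4$ and $x_{q_j}>0$ otherwise; (2) if $k=\gamma q_j$ with $1<\gamma\le a_{j+1}$ then $x_{q_j}$ and $x_k$ have opposite signs; (3) if $k=\sum_{j\ge m}\gamma_jq_j$ is the Ostrowski representation of $k$ with lowest nonzero digit $\gamma_m$, then $x_k$ and $x_{\gamma_mq_m}$ have the same sign. Let $\mathrm{Neg}(m)$ be the number of $0<k<m$ with $x_k<0$. Then $\mathrm{Neg}(q_n)$ is even if $n\equiv0,1\pmod4$ and odd otherwise.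
   Context: $\theta=[a_1,a_2,\dots]=1/(a_1+1/(a_2+\cdots))$, $q_n$ the denominator of $[a_1,\dots,a_n]$, $q_n=a_nq_{n-1}+q_{n-2}$ (here $q_1=1,q_2=2$). Ostrowski representation: every positive integer $k$ is uniquely $k=\sum_{j\ge1}\gamma_jq_j$ with integers $0\le\gamma_j\le a_{j+1}$, finitely many nonzero, and $\gamma_j=a_{j+1}\Rightarrow\gamma_{j-1}=0$. *)

(* Defs.v *)
From mathcomp Require Import all_boot all_order all_algebra.
From mathcomp Require Export reals.
Set Implicit Arguments. Unset Strict Implicit. Unset Printing Implicit Defensive.
Import Order.TTheory GRing.Theory Num.Theory.

(* An irrational theta = [a_1, a_2, ...] = 1/(a_1 + 1/(a_2 + ...)) is given by
   its (infinite) sequence of partial quotients a : nat -> nat, a j >= 1 for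
   j >= 1 (a 0 is unused). *)
Definition cf_digits (a : nat -> nat) : Prop := forall j, 0 < j -> 0 < a j.

Fixpoint qden (a : nat -> nat) (n : nat) : nat :=
  match n with
  | 0 => 1
  | 1 => a 1
  | (m.+1 as m1).+1 => a m1.+1 * qden a m1 + qden a m
  end.

Definition ostrowski (a : nat -> nat) (k : nat) (g : nat -> nat) : Prop :=
  g 0 = 0 /\
  (forall j, g j <= a j.+1) /\
  (forall j, 1 < j -> g j = a j.+1 -> g j.-1 = 0) /\
  exists N, (forall j, N <= j -> g j = 0) /\
            k = \sum_(1 <= j < N) g j * qden a j.

Section Signs.
Variable R : realType.
Local Open Scope ring_scope.
Definition opp_sign (x y : R) : Prop := (x < 0 /\ 0 < y) \/ (0 < x /\ y < 0).
Definition same_sign (x y : R) : Prop := (x < 0 /\ y < 0) \/ (0 < x /\ 0 < y).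
Definition Neg (x : nat -> R) (m : nat) : nat := count (fun k => x k < 0) (iota 1 m.-1).
End Signs.

(* Main.v *)
Require Import Defs.
From mathcomp Require Import all_boot all_order all_algebra.
From mathcomp Require Import zify.
Import Order.TTheory GRing.Theory Num.Theory.
Set Implicit Arguments. Unset Strict Implicit.

Lemma qden_pos a : cf_digits a -> forall j, 0 < qden a j.
Proof.
move=> ha j; suff: 0 < qden a j /\ 0 < qden a j.+1 by case.
elim: j => [|j [h1 h2]]; first by split => //=; exact: ha.
split => //=; rewrite addn_gt0 h1 orbT //.
Qed.

Lemma qden_le1 a : cf_digits a -> forall j, qden a j <= qden a j.+1.
Proof.
move=> ha [|j] /=; first exact: ha.
have := ha j.+2 isT; have := qden_pos ha j.+1; nia.
Qed.

Lemma qden_ltS a : cf_digits a -> forall j, 0 < j -> qden a j < qden a j.+1.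
Proof.
move=> ha [|j] // _ /=.
have := ha j.+2 isT; have := qden_pos ha j.+1; have := qden_pos ha j; nia.
Qed.

Lemma qden_mono a : cf_digits a -> forall i j, i <= j -> qden a i <= qden a j.
Proof.
move=> ha i j; elim: j => [|j IH]; first by rewrite leqn0 => /eqP ->.
rewrite leq_eqVlt => /orP [/eqP -> //|]; rewrite ltnS => /IH h.
exact: leq_trans h (qden_le1 ha j).
Qed.

Definition rep a L r (g : nat -> nat) :=
  g 0 = 0 /\ (forall j, g j <= a j.+1) /\
  (forall j, 1 < j -> g j = a j.+1 -> g j.-1 = 0) /\
  (forall j, L <= j -> g j = 0) /\ r = \sum_(1 <= j < L) g j * qden a j.

Lemma rep_ostr a L r g : rep a L r g -> ostrowski a r g.
Proof. by case=> [h0 [h1 [h2 [h3 h4]]]]; do 3 (split => //); exists L. Qed.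

Lemma rep_lift a L r g : rep a L r g -> rep a L.+1 r g.
Proof.
case=> [h0 [h1 [h2 [h3 h4]]]]; do 3 (split => //); split.
  by move=> j hj; apply: h3; exact: ltnW.
case: L h3 h4 => [|L] h3 h4; first by rewrite h4 !big_geq.
by rewrite big_nat_recr //= h3 // mul0n addn0.
Qed.

Lemma rep_ext a L r g gam : cf_digits a -> 0 < L -> rep a L r g ->
  gam <= a L.+1 -> (gam = a L.+1 -> g L.-1 = 0) ->
  rep a L.+1 (gam * qden a L + r) (fun j => if j == L then gam else g j).
Proof.
move=> ha hL [h0 [h1 [h2 [h3 h4]]]] hg hgA.
split; first by case: L hL {h3 h4 hgA hg}.
split; first by move=> j; case: eqP => [->|] //.
split.
  move=> j hj; case: eqP => [-> /hgA|hjL hgj].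
    by case: L hL {h3 h4 hgA hg h1 h2} => // L _ /= ->; rewrite eqn_leq ltnn andbF.
  case: eqP => [hj1|_]; last exact: h2.
  have : j = L.+1 by case: j hj hj1 {hgj hjL} => // j _ /= ->.
  move=> ej; move: hgj; rewrite ej h3 // => h; have := ha L.+2 isT; lia.
split.
  move=> j hj; case: eqP => [hjL|_]; first by rewrite hjL ltnn in hj.
  by apply: h3; exact: ltnW.
rewrite big_nat_recr /=; last exact: hL.
rewrite eqxx addnC; congr (_ + _); rewrite h4; apply: eq_big_nat => j /andP [_ hj].
by rewrite (ltn_eqF hj).
Qed.

Lemma rep0 a L : rep a L 0 (fun _ => 0).
Proof. do 4 (split => //); by rewrite big1. Qed.

Lemma rep_exists a : cf_digits a -> a 1 = 1 ->
  forall L r, r < qden a L -> exists g, rep a L r g.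
Proof.
move=> ha a1 L; suff: (forall r, r < qden a L -> exists g, rep a L r g) /\
  (forall r, r < qden a L.+1 -> exists g, rep a L.+1 r g) by case.
elim: L => [|L [IH1 IH2]].
  by split => r; rewrite /= ?a1 ltnS leqn0 => /eqP ->; exists (fun _ => 0); apply: rep0.
split => // r hr.
set M := L.+1.
have hQ := qden_pos ha M.
have hA := ha M.+1 isT.
case: (ltnP r (a M.+1 * qden a M)) => hrA.
  have hr' : r %% qden a M < qden a M by rewrite ltn_pmod.
  have [g hg] := IH2 _ hr'.
  exists (fun j => if j == M then r %/ qden a M else g j).
  have hlt : r %/ qden a M < a M.+1 by rewrite ltn_divLR.
  rewrite {1}(divn_eq r (qden a M)).
  apply: rep_ext => //; first exact: ltnW.
  by move=> e; rewrite e ltnn in hlt.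
have hr' : r - a M.+1 * qden a M < qden a L.
  have e : qden a M.+1 = a M.+1 * qden a M + qden a L by []. move: hr hrA; rewrite e; lia.
have [g hg] := IH1 _ hr'.
exists (fun j => if j == M then a M.+1 else g j).
have -> : r = a M.+1 * qden a M + (r - a M.+1 * qden a M) by lia.
apply: rep_ext => //; first exact: rep_lift.
by move=> _; case: hg => [_ [_ [_ [h3 _]]]]; apply: h3.
Qed.

Lemma same_sign_eq (R : realType) (u v y : R) :
  same_sign u y -> same_sign v y -> (u < 0)%R = (v < 0)%R.
Proof.
move=> [[h1 h2]|[h1 h2]] [[h3 h4]|[h3 h4]]; rewrite ?h1 ?h3.
- by [].
- by have := lt_trans h2 h4; rewrite ltxx.
- by have := lt_trans h4 h2; rewrite ltxx.
- by rewrite !ltNge !ltW.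
Qed.

Lemma opp_sign_eq (R : realType) (u v : R) :
  opp_sign u v -> (v < 0)%R = ~~ (u < 0)%R.
Proof.
move=> [[h1 h2]|[h1 h2]]; first by rewrite h1 ltNge (ltW h2).
by rewrite h2 ltNge (ltW h1).
Qed.

Lemma sign_shift (R : realType) a n (x : nat -> R) L gam r :
  cf_digits a -> a 1 = 1 ->
  (forall k g m, 0 < k < qden a n -> ostrowski a k g ->
     g m != 0 -> (forall j, j < m -> g j = 0) ->
     same_sign (x k) (x (g m * qden a m))) ->
  0 < L -> L < n -> 0 < gam <= a L.+1 -> 0 < r < qden a L ->
  (gam = a L.+1 -> r < qden a L.-1) ->
  (x (gam * qden a L + r) < 0)%R = (x r < 0)%R.
Proof.
move=> ha a1 H3 hL hLn /andP [g0 gA] /andP [r0 rQ] hrA.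
have [g [hg hgL]] : exists g, rep a L r g /\ (gam = a L.+1 -> g L.-1 = 0).
  case: (eqVneq gam (a L.+1)) => e.
    have [g hg] := rep_exists ha a1 (hrA e).
    exists g; split; last by move=> _; case: hg => [_ [_ [_ [h3 _]]]]; apply: h3.
    by have := rep_lift hg; rewrite prednK.
  have [g hg] := rep_exists ha a1 rQ.
  by exists g; split => // e'; rewrite e' eqxx in e.
have hk := rep_ext ha hL hg gA hgL.
have hbound : gam * qden a L + r < qden a L.+1.
  case: L hL {hLn hg hgL hk hrA gA} (hrA) (gA) rQ => // L _ hrA gA rQ.
  have e : qden a L.+2 = a L.+2 * qden a L.+1 + qden a L by [].
  rewrite e; case: (eqVneq gam (a L.+2)) => [e'|ne].
    by move: (hrA e') => /= h; rewrite e' ltn_add2l.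
  have : gam < a L.+2 by rewrite ltn_neqAle ne gA.
  move: rQ; nia.
have hLn' : qden a L.+1 <= qden a n by apply: qden_mono.
case: hg => [h0 [h1 [h2 [h3 h4]]]].
have exP : exists j, g j != 0.
  case: (boolP (has (fun j => g j != 0) (iota 0 L))) => [/hasP [j _ hj]|hn].
    by exists j.
  exfalso; move: r0; rewrite h4 big_nat_cond big1 // => j /andP [/andP [_ hjL] _].
  have : ~~ (g j != 0) by apply: (hasPn hn); rewrite mem_iota.
  by rewrite negbK => /eqP ->.
case: (@ex_minnP (fun j => g j != 0) exP) => m hm hmin.
have lower : forall j, j < m -> g j = 0.
  move=> j hj; apply/eqP; apply: contraTT hj => h; rewrite -leqNgt; exact: hmin.
have hmL : m < L.
  rewrite ltnNge; apply/negP => /h3 e; by rewrite e in hm.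
have hgg : rep a L r g by [].
have s1 := H3 r g m _ (rep_ostr hgg) hm lower.
have s2 := H3 _ _ m _ (rep_ostr hk).
move: s2 => /= ; rewrite (ltn_eqF hmL) => s2.
apply: (same_sign_eq (s2 _ hm _) (s1 _)).
- apply/andP; split; first by rewrite addn_gt0 r0 orbT.
  exact: leq_trans hbound hLn'.
- move=> j hj; rewrite (ltn_eqF (ltn_trans hj hmL)); exact: lower.
- rewrite r0 /=; apply: leq_trans rQ _; apply: leq_trans (ltnW (qden_ltS ha hL)) hLn'.
Qed.

Definition ee (L : nat) := ~~ ((L %% 4 == 0) || (L %% 4 == 1)).

Lemma parity M A N N' (s : bool) : 0 < M -> 0 < A -> odd N = ee M ->
  odd N' = ee M.-1 -> s = ~~ ee M ->
  odd (A * N + s + (A - 1) * ~~ s + N') = ee M.+1.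
Proof.
move=> hM hA HN HN' ->; case: A hA => // A _.
rewrite subSS subn0 !oddD !oddM HN HN' negbK.
case: M hM {HN HN'} => // M _ /=; rewrite /ee.
have : M %% 4 < 4 by rewrite ltn_mod.
case hm: (M %% 4) => [|[|[|[|k]]]] // _.
- have -> : M.+1 %% 4 = 1 by lia.
  have -> : M.+2 %% 4 = 2 by lia.
  by case: (odd A).
- have -> : M.+1 %% 4 = 2 by lia.
  have -> : M.+2 %% 4 = 3 by lia.
  by case: (odd A).
- have -> : M.+1 %% 4 = 3 by lia.
  have -> : M.+2 %% 4 = 0 by lia.
  by case: (odd A).
- have -> : M.+1 %% 4 = 0 by lia.
  have -> : M.+2 %% 4 = 1 by lia.
  by case: (odd A).
Qed.

Theorem lemma2p5 (R : realType) (a : nat -> nat) (n : nat) (x : nat -> R) :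
  cf_digits a -> a 1 = 1 -> a 2 = 1 -> a 3 = 1 -> 1 <= n ->
  (* (1) *)
  (forall j, 1 <= j -> 0 < qden a j < qden a n ->
     if (j %% 4 == 0) || (j %% 4 == 1) then (x (qden a j) < 0)%R
     else (0 < x (qden a j))%R) ->
  (* (2) *)
  (forall j gam, 1 <= j -> 1 < gam <= a j.+1 -> 0 < gam * qden a j < qden a n ->
     opp_sign (x (qden a j)) (x (gam * qden a j))) ->
  (* (3) *)
  (forall k g m, 0 < k < qden a n -> ostrowski a k g ->
     g m != 0 -> (forall j, j < m -> g j = 0) ->
     same_sign (x k) (x (g m * qden a m))) ->
  odd (Neg x (qden a n)) = ~~ ((n %% 4 == 0) || (n %% 4 == 1)).
Proof.
move=> ha a1 a2 a3 hn H1 H2 H3.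
have qS : forall L, 0 < L -> qden a L.+1 = a L.+1 * qden a L + qden a L.-1.
  by case.
have qn : forall L, L < n -> qden a L.+1 <= qden a n.
  by move=> L hL; apply: qden_mono.
have shift : forall L gam l, 0 < L -> L < n -> 0 < gam <= a L.+1 ->
    l < qden a L -> (gam = a L.+1 -> l < qden a L.-1) ->
    count (fun k => (x k < 0)%R) (iota (gam * qden a L).+1 l) =
    count (fun k => (x k < 0)%R) (iota 1 l).
  move=> L gam l hL hLn hg hl hlA.
  rewrite -addn1 iotaDl count_map; apply: eq_in_count => r.
  rewrite mem_iota => /andP [r1 r2] /=.
  apply: (sign_shift ha a1 H3 hL hLn hg).
    by apply/andP; split => //; lia.
  by move=> e; have := hlA e; lia.
have mult1 : forall L, 0 < L -> L < n ->
    (x (qden a L) < 0)%R = (L %% 4 == 0) || (L %% 4 == 1).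
  move=> L hL hLn.
  have hq : 0 < qden a L < qden a n.
    by rewrite qden_pos //=; apply: leq_trans (qden_ltS ha hL) (qn _ hLn).
  case c: (_ || _); move: (H1 L hL hq); rewrite c => h //.
  by rewrite ltNge (ltW h).
have multg : forall L gam, 0 < L -> L < n -> 1 < gam <= a L.+1 ->
    (x (gam * qden a L) < 0)%R = ~~ (x (qden a L) < 0)%R.
  move=> L gam hL hLn hg; apply: opp_sign_eq; apply: H2 => //.
  have := qn _ hLn; rewrite qS //.
  have := qden_pos ha L; have := qden_pos ha L.-1; move: hg; nia.
have block : forall L gam, 0 < L -> L < n -> 0 < gam <= a L.+1 ->
    count (fun k => (x k < 0)%R) (iota 1 (gam * qden a L)) =
    gam * count (fun k => (x k < 0)%R) (iota 1 (qden a L).-1)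
    + (x (qden a L) < 0)%R + (gam - 1) * ~~ (x (qden a L) < 0)%R.
  move=> L gam hL hLn; have hQ := qden_pos ha L.
  have eQ : qden a L = (qden a L).-1 + 1 by rewrite addn1 prednK.
  elim: gam => [//|g IH] /andP [_ hg].
  case: g IH hg => [_ _ | g IH hg].
    rewrite mul1n {1}eQ iotaD count_cat /= add1n prednK //.
    by rewrite mul1n mul0n !addn0.
  rewrite mulSnr iotaD count_cat IH; last by rewrite /=; lia.
  rewrite [X in iota (1 + _) X]eQ iotaD count_cat add1n shift //; last first.
  - by move=> e; lia.
  - by lia.
  - by rewrite /=; lia.
  have -> : (g.+1 * qden a L).+1 + (qden a L).-1 = g.+2 * qden a L.
    by rewrite [g.+2 * _]mulSnr; lia.
  rewrite /= (multg L g.+2) //.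
  lia.
have step : forall M, 0 < M -> M < n ->
    Neg x (qden a M.+1) = a M.+1 * Neg x (qden a M) + (x (qden a M) < 0)%R
      + (a M.+1 - 1) * ~~ (x (qden a M) < 0)%R + Neg x (qden a M.-1).
  move=> M hM hMn; rewrite /Neg qS //.
  have hQ' := qden_pos ha M.-1.
  have hQQ : qden a M.-1 <= qden a M by apply: (qden_mono ha); lia.
  have hA := ha M.+1 isT.
  have -> : (a M.+1 * qden a M + qden a M.-1).-1 =
            a M.+1 * qden a M + (qden a M.-1).-1 by lia.
  rewrite iotaD count_cat block //; last by rewrite hA leqnn.
  rewrite add1n shift //; first by rewrite hA leqnn.
  - lia.
  - by move=> _; lia.
suff main : forall L, (L <= n -> odd (Neg x (qden a L)) = ee L) /\
                      (L.+1 <= n -> odd (Neg x (qden a L.+1)) = ee L.+1).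
  by case: (main n) => h _; exact: h.
elim=> [|L [IH1 IH2]].
  by split => _ //=; rewrite a1.
split => // hL.
rewrite step //; apply: parity => //.
- exact: ha.
- by apply: IH2; lia.
- by apply: IH1; lia.
- by rewrite mult1 //= /ee negbK.
Qed.
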